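(* Let $(F_n)_{n\ge0}$ be the Fibonacci numbers, $F_0=0$, $F_1=F_2=1$, $F_{n+2}=F_{n+1}+F_n$. Then for every $n\ge1$, $$F_{2n-1}F_{(n+1)^2}=F_{2n}\left(F_{2n+1}+F_{2n-1}\right)F_{n^2}+F_{2n+1}\left(F_{2n-1}F_{2n+1}-F_{2n}^2\right)F_{(n-1)^2}.$$ *)

(* Defs.v *)
From Stdlib Require Import ZArith Arith Lia.

Fixpoint fib (n : nat) : nat :=
  match n with
  | 0 => 0
  | S m => match m with
           | 0 => 1
           | S k => fib m + fib k
           end
  end.

Definition F (n : nat) : Z := Z.of_nat (fib n).

(* Main.v *)
Require Import Defs.
From Stdlib Require Import ZArith Arith Lia.
Open Scope Z_scope.

Lemma Frec (m : nat) : F (S (S m)) = F (S m) + F m.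
Proof. unfold F. change (fib (S (S m))) with (fib (S m) + fib m)%nat. lia. Qed.

Lemma F0 : F 0 = 0. Proof. reflexivity. Qed.
Lemma F1 : F 1 = 1. Proof. reflexivity. Qed.

Lemma Fadd (m n : nat) : F (m + n + 1) = F (m + 1) * F (n + 1) + F m * F n.
Proof.
  assert (H : forall n, F (m + n + 1) = F (m + 1) * F (n + 1) + F m * F n /\
                        F (m + S n + 1) = F (m + 1) * F (S n + 1) + F m * F (S n)).
  { induction n0 as [|n0 [IH1 IH2]].
    - split.
      + replace (m + 0 + 1)%nat with (m + 1)%nat by lia. simpl (0 + 1)%nat.
        rewrite F1, F0. ring.
      + replace (m + 1 + 1)%nat with (S (S m)) by lia.
        replace (m + 1)%nat with (S m) by lia. simpl (1 + 1)%nat.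
        change (F 2) with 1. rewrite F1, Frec. ring.
    - split; [exact IH2|].
      replace (m + S (S n0) + 1)%nat with (S (S (m + n0 + 1))) by lia.
      replace (S (S n0) + 1)%nat with (S (S (n0 + 1))) by lia.
      rewrite !Frec.
      replace (S (m + n0 + 1)) with (m + S n0 + 1)%nat by lia.
      replace (S (n0 + 1)) with (S n0 + 1)%nat by lia.
      rewrite IH1, IH2. replace (S (S n0)) with (S n0 + 1)%nat by lia.
      replace (S n0 + 1)%nat with (S (S n0)) by lia. rewrite Frec.
      replace (n0 + 1)%nat with (S n0) by lia. ring. }
  apply H.
Qed.

Theorem mainTheorem8 (n : nat) (hn : (1 <= n)%nat) :
  F (2 * n - 1) * F ((n + 1) * (n + 1))
  = F (2 * n) * (F (2 * n + 1) + F (2 * n - 1)) * F (n * n)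
    + F (2 * n + 1) * (F (2 * n - 1) * F (2 * n + 1) - F (2 * n) * F (2 * n))
      * F ((n - 1) * (n - 1)).
Proof.
  set (k := (2 * n - 2)%nat).
  set (a := ((n - 1) * (n - 1))%nat).
  assert (E1 : (2 * n - 1 = k + 1)%nat) by lia.
  assert (E2 : (2 * n = S (k + 1))%nat) by lia.
  assert (E3 : (2 * n + 1 = S (S (k + 1)))%nat) by lia.
  assert (E4 : (n * n = a + k + 1)%nat) by (unfold a; nia).
  assert (E5 : ((n + 1) * (n + 1) = a + (S k + S k + 1) + 1)%nat)
    by (unfold a; nia).
  rewrite E3, E1, E2, E4, E5. fold a.
  rewrite !(Fadd a).
  assert (G1 : F (S k + S k + 1) = F (S k + 1) * F (S k + 1) + F (S k) * F (S k)) by apply Fadd.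
  assert (G2 : F (S k + S k + 1 + 1) = F (S k + 1) * F (S (S k) + 1) + F (S k) * F (S (S k))).
  { replace (S k + S k + 1 + 1)%nat with (S k + S (S k) + 1)%nat by lia. apply Fadd. }
  rewrite G1, G2.
  replace (S k + 1)%nat with (S (S k)) by lia.
  replace (S (S k) + 1)%nat with (S (S (S k))) by lia.
  replace (k + 1)%nat with (S k) by lia.
  replace (a + 1)%nat with (S a) by lia.
  rewrite !Frec.
  ring.
Qed.
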